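(* In the setting below, with $Q=L/\mu$, suppose $0<\eta\le\frac1L$. Then for every $k\ge 0$, \[ \|x_k-x^*\|\le \frac{2}{\mu}\|d_k\|+2\eta Q\sum_{j=(k-K)_+}^{k-1}\|d_j\|. \]
   Context: Let $m,n\ge 1$ be integers and $\|\cdot\|$ the Euclidean norm on $\mathbb{R}^n$. For $i=1,\dots,m$, let $f_i:\mathbb{R}^n\to\mathbb{R}$ be continuously differentiable with $\|\nabla f_i(x)-\nabla f_i(y)\|\le L_i\|x-y\|$ for all $x,y$, where $L_i\ge 0$ (the $f_i$ are not assumed convex). Let $f=\frac1m\sum_{i=1}^m f_i$ and $L=\frac1m\sum_{i=1}^m L_i$. Assume $f$ is $\mu$-strongly convex for some $\mu>0$ (i.e. $x\mapsto f(x)-\frac{\mu}{2}\|x\|^2$ is convex). Let $r:\mathbb{R}^n\to(-\infty,\infty]$ be proper, closed and convex, let $F=f+r$, and let $x^*$ be the unique minimizer of $F$. For $\eta>0$ define $\mathrm{prox}_r^\eta(y)=\arg\min_{x\in\mathbb{R}^n}\{\frac12\|x-y\|^2+\eta r(x)\}$. PIAG method: fix an integer $K\ge 0$, a step size $\eta>0$ and $x_0\in\mathbb{R}^n$; for each $k\ge0$ and each $i$ let $\tau_{i,k}$ be any (deterministically chosen) integer with $\max(k-K,0)\le\tau_{i,k}\le k$; set $g_k=\frac1m\sum_{i=1}^m\nabla f_i(x_{\tau_{i,k}})$ and $x_{k+1}=\mathrm{prox}_r^\eta(x_k-\eta g_k)$. Define $d_k=(x_{k+1}-x_k)/\eta$.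 Write $(t)_+=\max(t,0)$; empty sums are zero. *)

(* Defs.v *)
From HB Require Import structures.
From mathcomp Require Import all_boot all_order all_algebra.
From mathcomp Require Import all_classical all_reals all_analysis.
Set Implicit Arguments. Unset Strict Implicit. Unset Printing Implicit Defensive.
Import Order.TTheory GRing.Theory Num.Theory.
Import numFieldNormedType.Exports.
Local Open Scope ring_scope.

Section Defs.
Context {R : realType} {n : nat}.

Definition dotv (x y : 'rV[R]_n) : R := \sum_(i < n) x ord0 i * y ord0 i.
Definition enorm (x : 'rV[R]_n) : R := Num.sqrt (dotv x x).

Definition is_gradient (f : 'rV[R]_n -> R) (g : 'rV[R]_n -> 'rV[R]_n) : Prop :=
  forall x, differentiable f x /\ forall h, 'd f x h = dotv (g x) h.

Definition lipschitz_with (g : 'rV[R]_n -> 'rV[R]_n) (L : R) : Prop :=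
  forall x y, enorm (g x - g y) <= L * enorm (x - y).

Definition convex_fun (h : 'rV[R]_n -> R) : Prop :=
  forall (x y : 'rV[R]_n) (t : R), 0 <= t -> t <= 1 ->
    h (t *: x + (1 - t) *: y) <= t * h x + (1 - t) * h y.

Definition strongly_convex (f : 'rV[R]_n -> R) (mu : R) : Prop :=
  convex_fun (fun x => f x - mu / 2 * enorm x ^+ 2).

Definition proper_efun (r : 'rV[R]_n -> \bar R) : Prop :=
  (exists x, r x != +oo%E) /\ (forall x, r x != -oo%E).

Definition convex_efun (r : 'rV[R]_n -> \bar R) : Prop :=
  forall (x y : 'rV[R]_n) (t : R), 0 <= t -> t <= 1 ->
    (r (t *: x + (1 - t) *: y)%R <= t%:E * r x + (1 - t)%R%:E * r y)%E.

(* closed = lower semicontinuous (closed epigraph) *)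
Definition closed_efun (r : 'rV[R]_n -> \bar R) : Prop :=
  lower_semicontinuous r.

Definition is_prox (r : 'rV[R]_n -> \bar R) (eta : R) (y p : 'rV[R]_n) : Prop :=
  forall x, ((2^-1 * enorm (p - y) ^+ 2)%R%:E + eta%:E * r p
             <= (2^-1 * enorm (x - y) ^+ 2)%R%:E + eta%:E * r x)%E.

Definition is_minimizer (f : 'rV[R]_n -> R) (r : 'rV[R]_n -> \bar R)
  (xs : 'rV[R]_n) : Prop :=
  forall x, ((f xs)%:E + r xs <= (f x)%:E + r x)%E.

End Defs.

(* Main.v *)
Require Import Defs.
From HB Require Import structures.
From mathcomp Require Import all_boot all_order all_algebra.
From mathcomp Require Import all_classical all_reals all_analysis.
From mathcomp Require Import ring lra.
Import Order.TTheory GRing.Theory Num.Theory.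
Import numFieldNormedType.Exports.
Local Open Scope ring_scope.

Section Helpers.
Local Open Scope classical_set_scope.

Lemma lim_le (R : realType) (q : R -> R) (D c k : R) :
  q t @[t --> 0^'] --> D ->
  (forall t, 0 < t -> t <= 1 -> q t <= c + t * k) -> D <= c.
Proof.
move=> cq H; apply/ler_addgt0Pr => e e0.
have e2 : 0 < e / 2 by rewrite divr_gt0.
have k1 : 0 < `|k| + 1 by rewrite ltr_wpDl.
have hd : 0 < Num.min 1 (e / 2 / (`|k| + 1)) by rewrite lt_min ltr01 divr_gt0.
have N1 : \forall t \near 0^', `|D - q t| < e / 2 by move/cvgrPdist_lt : cq; apply.
have N2 : \forall t \near 0^'+, `|D - q t| < e / 2.
  by move: N1; rewrite !near_withinE; apply: filterS => t P /gt_eqF/negbT; exact: P.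
have N3 := (@nbhs_right_gt R 0).
have N4 := @nbhs_right_le R 0 _ hd.
have PF := @at_right_proper_filter R 0.
have [t] := filter_ex (filterI (filterI N2 N3) N4). move=> [[Pt t0] tm].
move: tm; rewrite le_min => /andP[t1 te].
have := H t t0 t1.
have : t * k <= e / 2.
  apply: le_trans (ler_norm _) _; rewrite normrM gtr0_norm //.
  apply: (@le_trans _ _ (t * (`|k| + 1))); first by rewrite ler_pM2l // lerDl.
  by rewrite -ler_pdivlMr.
move: Pt; rewrite ltr_norml => /andP[_ h1] h2 h3.
lra.
Qed.

Section Vec.
Context {R : realType} {n : nat}.
Implicit Types x y z : 'rV[R]_n.

Lemma dotvC x y : dotv x y = dotv y x.
Proof. by apply: eq_bigr => i _; rewrite mulrC. Qed.

Lemma dotvDl x y z : dotv (x + y) z = dotv x z + dotv y z.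
Proof. by rewrite /dotv -big_split; apply: eq_bigr => i _; rewrite mxE mulrDl. Qed.

Lemma dotvDr x y z : dotv z (x + y) = dotv z x + dotv z y.
Proof. by rewrite dotvC dotvDl !(dotvC z). Qed.

Lemma dotvZl c x y : dotv (c *: x) y = c * dotv x y.
Proof. by rewrite /dotv mulr_sumr; apply: eq_bigr => i _; rewrite mxE mulrA. Qed.

Lemma dotvZr c x y : dotv y (c *: x) = c * dotv y x.
Proof. by rewrite dotvC dotvZl dotvC. Qed.

Lemma dotvNl x y : dotv (- x) y = - dotv x y.
Proof. by rewrite -scaleN1r dotvZl mulN1r. Qed.

Lemma dotvNr x y : dotv y (- x) = - dotv y x.
Proof. by rewrite dotvC dotvNl dotvC. Qed.

Lemma dotvBl x y z : dotv (x - y) z = dotv x z - dotv y z.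
Proof. by rewrite dotvDl dotvNl. Qed.

Lemma dotvBr x y z : dotv z (x - y) = dotv z x - dotv z y.
Proof. by rewrite dotvDr dotvNr. Qed.

Lemma dotv0l x : dotv 0 x = 0.
Proof. by rewrite /dotv big1 // => i _; rewrite mxE mul0r. Qed.

Lemma dotv_suml (I : Type) (s : seq I) (F : I -> 'rV[R]_n) y :
  dotv (\sum_(i <- s) F i) y = \sum_(i <- s) dotv (F i) y.
Proof.
elim: s => [|a s IH]; first by rewrite !big_nil dotv0l.
by rewrite !big_cons dotvDl IH.
Qed.

Lemma dotv_ge0 x : 0 <= dotv x x.
Proof. by apply: sumr_ge0 => i _; rewrite -expr2 sqr_ge0. Qed.

Lemma enorm_ge0 x : 0 <= enorm x.
Proof. exact: sqrtr_ge0. Qed.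

Lemma enorm_sqr x : enorm x ^+ 2 = dotv x x.
Proof. by rewrite sqr_sqrtr // dotv_ge0. Qed.

Lemma CS_sq x y : dotv x y ^+ 2 <= dotv x x * dotv y y.
Proof.
set A := dotv x x; set B := dotv x y; set C := dotv y y.
have H t : 0 <= A + 2 * t * B + t ^+ 2 * C.
  have := dotv_ge0 (x + t *: y).
  rewrite !dotvDl !dotvDr !dotvZl !dotvZr (dotvC y x) -/A -/B -/C.
  by move=> h; apply: le_trans h _; rewrite le_eqVlt; apply/orP; left; apply/eqP; ring.
have C0 : 0 <= C by exact: dotv_ge0.
have A0 : 0 <= A by exact: dotv_ge0.
case: (ltrgt0P C) => hC.
- have := H (- B / C).
  have -> : A + 2 * (- B / C) * B + (- B / C) ^+ 2 * C = (A * C - B ^+ 2) / C.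
    by field; rewrite gt_eqF.
  by rewrite pmulr_lge0 ?invr_gt0 // subr_ge0.
- by move: C0; rewrite leNgt hC.
- have -> : B = 0.
    apply/eqP; apply/negPn/negP => hB.
    have := H (- (A + 1) / (2 * B)).
    have -> : A + 2 * (- (A + 1) / (2 * B)) * B + (- (A + 1) / (2 * B)) ^+ 2 * C = -1.
      by rewrite hC; field.
    by move=> h; lra.
  by rewrite hC expr0n /= mulr0.
Qed.

Lemma CS x y : dotv x y <= enorm x * enorm y.
Proof.
case: (lerP (dotv x y) 0) => h.
  by apply: le_trans h _; rewrite mulr_ge0 // enorm_ge0.
rewrite /enorm -sqrtrM ?dotv_ge0 // -(ger0_norm (ltW h)) -sqrtr_sqr ler_sqrt ?CS_sq //.
by rewrite mulr_ge0 // dotv_ge0.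
Qed.

Lemma enormN x : enorm (- x) = enorm x.
Proof. by rewrite /enorm dotvNl dotvNr opprK. Qed.

Lemma enormZ c x : enorm (c *: x) = `|c| * enorm x.
Proof.
rewrite /enorm dotvZl dotvZr mulrA -expr2 sqrtrM ?sqr_ge0 //.
by rewrite sqrtr_sqr.
Qed.

Lemma enormB x y : enorm (x - y) = enorm (y - x).
Proof. by rewrite -enormN opprB. Qed.

Lemma enormD x y : enorm (x + y) <= enorm x + enorm y.
Proof.
rewrite -(ler_pXn2r (_ : (0 < 2)%N)) ?nnegrE ?addr_ge0 ?enorm_ge0 //.
rewrite !enorm_sqr sqrrD !enorm_sqr dotvDl !dotvDr (dotvC y x).
have := CS x y; lra.
Qed.

Lemma enorm_sum (I : Type) (s : seq I) (F : I -> 'rV[R]_n) :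
  enorm (\sum_(i <- s) F i) <= \sum_(i <- s) enorm (F i).
Proof.
elim: s => [|a s IH].
  by rewrite !big_nil /enorm dotv0l sqrtr0.
rewrite !big_cons; apply: le_trans (enormD _ _) _; exact: lerD.
Qed.

Lemma CSn x y : - dotv x y <= enorm x * enorm y.
Proof. by rewrite -dotvNl -(enormN x) CS. Qed.

End Vec.

Lemma cvg_sumR (R : realType) (I : Type) (s : seq I) (Fs : I -> R -> R) (ls : I -> R) :
  (forall i, Fs i t @[t --> 0^'] --> ls i) ->
  (\sum_(i <- s) Fs i t) @[t --> 0^'] --> \sum_(i <- s) ls i.
Proof.
move=> H; elim: s => [|a s IH].
  rewrite big_nil; under eq_fun do rewrite big_nil; exact: cvg_cst.
rewrite big_cons; under eq_fun do rewrite big_cons.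
exact: cvgD.
Qed.

Lemma quot_grad (R : realType) (n : nat) (F : 'rV[R]_n -> R) (G : 'rV[R]_n -> 'rV[R]_n) :
  is_gradient F G -> forall x v,
  t^-1 * (F (t *: v + x) - F x) @[t --> 0^'] --> dotv (G x) v.
Proof.
move=> hg x v; have [dF dG] := hg x.
have hd := diff_derivable (v:=v) dF.
rewrite -dG -deriveE //.
Qed.

Lemma grad_f (R : realType) (m n : nat) (fs : 'I_m -> 'rV[R]_n -> R)
  (gs : 'I_m -> 'rV[R]_n -> 'rV[R]_n) :
  (forall i, is_gradient (fs i) (gs i)) -> forall x v,
  t^-1 * ((fun z => m%:R^-1 * \sum_(i < m) fs i z) (t *: v + x)
          - (fun z => m%:R^-1 * \sum_(i < m) fs i z) x) @[t --> 0^']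
  --> dotv (m%:R^-1 *: \sum_(i < m) gs i x) v.
Proof.
move=> hg x v /=.
have -> : (fun t : R => t^-1 * (m%:R^-1 * \sum_(i < m) fs i (t *: v + x) -
   m%:R^-1 * \sum_(i < m) fs i x)) =
   (fun t => m%:R^-1 * \sum_(i < m) (t^-1 * (fs i (t *: v + x) - fs i x))).
  apply: funext => t; rewrite -mulrBr -sumrB mulrCA mulr_sumr //.
rewrite dotvZl dotv_suml.
apply: cvgMl_tmp; apply: cvg_sumR => i.
exact: quot_grad.
Qed.

Lemma div_le (R : realType) (t X B : R) : 0 < t -> X <= t * B -> t^-1 * X <= B.
Proof. by move=> t0 h; rewrite ler_pdivrMl. Qed.

Lemma dotv_comb (R : realType) (n : nat) (a : R) (v x : 'rV[R]_n) :
  dotv (a *: v + x) (a *: v + x) = dotv x x + 2 * a * dotv x v + a ^+ 2 * dotv v v.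
Proof. rewrite !dotvDl !dotvDr !dotvZl !dotvZr (dotvC v x); ring. Qed.

Lemma grad_ineq (R : realType) (n : nat) (f : 'rV[R]_n -> R) (G : 'rV[R]_n -> 'rV[R]_n)
  (mu : R) :
  (forall x v, t^-1 * (f (t *: v + x) - f x) @[t --> 0^'] --> dotv (G x) v) ->
  strongly_convex f mu -> forall x y,
  dotv (G x) (y - x) <= (f y - mu / 2 * dotv y y) - (f x - mu / 2 * dotv x x)
                        + mu * dotv x (y - x).
Proof.
move=> Hq hc x y.
apply: (@lim_le R _ _ _ (mu / 2 * dotv (y - x) (y - x)) (Hq x (y - x))) => t t0 t1.
have := hc y x t (ltW t0) t1.
have -> : t *: y + (1 - t) *: x = t *: (y - x) + x.
  by rewrite scalerBr scalerBl scale1r addrA addrAC.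
rewrite !enorm_sqr dotv_comb.
move: (y - x) => v h.
apply: div_le => //.
nra.
Qed.

Lemma strong_mono (R : realType) (n : nat) (f : 'rV[R]_n -> R) (G : 'rV[R]_n -> 'rV[R]_n)
  (mu : R) :
  (forall x v, t^-1 * (f (t *: v + x) - f x) @[t --> 0^'] --> dotv (G x) v) ->
  strongly_convex f mu -> forall x y,
  mu * dotv (x - y) (x - y) <= dotv (G x - G y) (x - y).
Proof.
move=> Hq hc x y.
have h1 := @grad_ineq _ _ _ _ _ Hq hc x y; have h2 := @grad_ineq _ _ _ _ _ Hq hc y x.
move: h1 h2; rewrite !dotvBl !dotvBr (dotvC y x).
move=> h1 h2; nra.
Qed.

Lemma G_lip (R : realType) (m n : nat) (gs : 'I_m -> 'rV[R]_n -> 'rV[R]_n)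
  (Ls : 'I_m -> R) (u : 'rV[R]_n) (w : 'I_m -> 'rV[R]_n) :
  (forall i, lipschitz_with (gs i) (Ls i)) ->
  enorm (m%:R^-1 *: \sum_(i < m) gs i u - m%:R^-1 *: \sum_(i < m) gs i (w i))
  <= m%:R^-1 * \sum_(i < m) Ls i * enorm (u - w i).
Proof.
move=> hL.
rewrite -scalerBr -sumrB enormZ ger0_norm ?invr_ge0 ?ler0n //.
apply: ler_wpM2l; first by rewrite invr_ge0 ler0n.
apply: le_trans (enorm_sum _ _ _) _.
by apply: ler_sum => i _; apply: hL.
Qed.

Lemma tele (R : realType) (n : nat) (x : nat -> 'rV[R]_n) (j k : nat) :
  (j <= k)%N -> enorm (x k - x j) <= \sum_(j <= l < k) enorm (x l.+1 - x l).
Proof.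
elim: k => [|k IH].
  rewrite leqn0 => /eqP ->; rewrite big_geq // subrr /enorm dotv0l sqrtr0 //.
rewrite leq_eqVlt => /orP[/eqP ->|hjk].
  by rewrite big_geq // subrr /enorm dotv0l sqrtr0.
have hjk' : (j <= k)%N by [].
rewrite big_nat_recr //=.
have -> : x k.+1 - x j = (x k - x j) + (x k.+1 - x k) by rewrite [RHS]addrC addrA subrK.
apply: le_trans (enormD _ _) _; rewrite lerD2r; exact: IH hjk'.
Qed.

Lemma fin_val (R : realType) (e : \bar R) : e != -oo%E -> e != +oo%E -> exists v, e = v%:E.
Proof. by case: e => [v||] // _ _; exists v. Qed.

Lemma opt_ineq (R : realType) (n : nat) (f : 'rV[R]_n -> R) (G : 'rV[R]_n -> 'rV[R]_n)
  (r : 'rV[R]_n -> \bar R) (xs p : 'rV[R]_n) (rs rp : R) :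
  (forall x v, t^-1 * (f (t *: v + x) - f x) @[t --> 0^'] --> dotv (G x) v) ->
  convex_efun r -> is_minimizer f r xs -> r xs = rs%:E -> r p = rp%:E ->
  - dotv (G xs) (p - xs) <= rp - rs.
Proof.
move=> Hq hc hmin hrs hrp.
apply: (@lim_le R _ _ _ 0 (cvgN (Hq xs (p - xs)))) => t t0 t1 /=.
have hm := hmin (t *: p + (1 - t) *: xs).
have hcv := hc p xs t (ltW t0) t1.
have E : t *: p + (1 - t) *: xs = t *: (p - xs) + xs.
  by rewrite scalerBr scalerBl scale1r addrA addrAC.
rewrite E hrs hrp in hm hcv.
have h : f xs + rs <= f (t *: (p - xs) + xs) + (t * rp + (1 - t) * rs).
  rewrite -lee_fin (EFinD (f xs)) (EFinD (f _)); apply: le_trans hm _; apply: leeD2l.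
  by rewrite EFinD !EFinM.
rewrite mulr0 addr0 -mulrN; apply: div_le => //.
move: h; move: (f _) => fz h; nra.
Qed.

Lemma prox_ineq (R : realType) (n : nat) (r : 'rV[R]_n -> \bar R) (eta : R)
  (y p xs : 'rV[R]_n) (rs rp : R) :
  0 < eta -> convex_efun r -> is_prox r eta y p -> r xs = rs%:E -> r p = rp%:E ->
  0 <= dotv (p - y) (xs - p) + eta * (rs - rp).
Proof.
move=> eta0 hc hp hrs hrp.
rewrite -oppr_le0.
apply: (@lim_le R (fun _ => - (dotv (p - y) (xs - p) + eta * (rs - rp))) _ 0
   (dotv (xs - p) (xs - p) / 2) (cvg_cst _)) => t t0 t1.
have hm := hp (t *: xs + (1 - t) *: p).
have hcv := hc xs p t (ltW t0) t1.
have E : t *: xs + (1 - t) *: p = t *: (xs - p) + p.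
  by rewrite scalerBr scalerBl scale1r addrA addrAC.
rewrite E hrs hrp in hm hcv.
have h : 2^-1 * enorm (p - y) ^+ 2 + eta * rp <=
   2^-1 * enorm (t *: (xs - p) + p - y) ^+ 2 + eta * (t * rs + (1 - t) * rp).
  rewrite -lee_fin !EFinD !EFinM; apply: le_trans hm _; apply: leeD2l.
  apply: lee_wpmul2l; first by rewrite lee_fin ltW.
  by rewrite EFinD !EFinM.
have N0 := dotv_ge0 (xs - p).
move: h N0; rewrite !enorm_sqr -addrA dotv_comb.
move: (dotv (p - y) (p - y)) (dotv (p - y) (xs - p)) (dotv (xs - p) (xs - p)) => P A N h N0.
have : 0 <= t * (A + eta * (rs - rp) + t * (N / 2)) by nra.
rewrite pmulr_rge0 // => h2; lra.
Qed.


End Helpers.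

Theorem lemma2 (R : realType) (m n : nat) (hm : (0 < m)%N) (hn : (0 < n)%N)
  (fs : 'I_m -> 'rV[R]_n -> R) (gs : 'I_m -> 'rV[R]_n -> 'rV[R]_n)
  (Ls : 'I_m -> R) (mu : R) (r : 'rV[R]_n -> \bar R) (xs : 'rV[R]_n)
  (K : nat) (eta : R) (tau : 'I_m -> nat -> nat) (x : nat -> 'rV[R]_n) :
  let f := fun z => m%:R^-1 * \sum_(i < m) fs i z in
  let L := m%:R^-1 * \sum_(i < m) Ls i in
  let Q := L / mu in
  let g := fun k => m%:R^-1 *: \sum_(i < m) gs i (x (tau i k)) in
  let d := fun k => eta^-1 *: (x k.+1 - x k) in
  (forall i, is_gradient (fs i) (gs i)) ->
  (forall i, 0 <= Ls i) ->
  (forall i, lipschitz_with (gs i) (Ls i)) ->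
  0 < mu -> strongly_convex f mu ->
  proper_efun r -> closed_efun r -> convex_efun r ->
  is_minimizer f r xs ->
  0 < eta -> eta <= L^-1 ->
  (forall i k, (k - K <= tau i k)%N /\ (tau i k <= k)%N) ->
  (forall k, is_prox r eta (x k - eta *: g k) (x k.+1)) ->
  forall k : nat,
    enorm (x k - xs) <=
      2 / mu * enorm (d k) + 2 * eta * Q * \sum_(k - K <= j < k) enorm (d j).
Proof.
move=> f L Q g d hg hL0 hlip mu0 hsc [[x0 hx0] hninf] _ hconv hmin eta0 etaL htau hprox k.
pose G := fun z => m%:R^-1 *: \sum_(i < m) gs i z.
have Hq := @grad_f R m n fs gs hg.
have SM := @strong_mono R n f G mu Hq hsc.
have Glip : forall u v, enorm (G u - G v) <= L * enorm (u - v).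
  move=> u v; apply: le_trans (@G_lip _ _ _ _ _ u (fun=> v) hlip) _.
  by rewrite -mulr_suml mulrA.
have L0 : 0 <= L by rewrite mulr_ge0 ?invr_ge0 ?ler0n // sumr_ge0.
have muL : mu <= L.
  pose u : 'rV[R]_n := const_mx 1.
  have uu : dotv u u = n%:R.
    rewrite /dotv (eq_bigr (fun=> 1)); first by rewrite sumr_const card_ord.
    by move=> i _; rewrite mxE mulr1.
  have upos : 0 < dotv u u by rewrite uu ltr0n.
  have h1 := SM u 0.
  have h2 := CS (G u - G 0) (u - 0).
  have h3 := Glip u 0.
  rewrite !subr0 in h1 h2 h3.
  have h4 : enorm (G u - G 0) * enorm u <= L * enorm u * enorm u.
    by apply: ler_wpM2r => //; exact: enorm_ge0.
  have h5 : enorm u * enorm u = dotv u u by rewrite -expr2 enorm_sqr.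
  have : mu * dotv u u <= L * dotv u u.
    apply: (le_trans h1); apply: (le_trans h2); rewrite -h5 mulrA; exact: h4.
  by rewrite ler_pM2r //.
have Lpos : 0 < L by apply: lt_le_trans muL.
have etaL1 : eta * L <= 1 by rewrite -ler_pdivlMr // div1r.
have etamu : eta * mu <= 1.
  by apply: le_trans etaL1; rewrite ler_pM2l.
have [v0 hv0] := @fin_val _ (_) (hninf x0) hx0.
have [rs hrs] : exists rs, r xs = rs%:E.
  apply: @fin_val _ (_) (hninf xs) _; apply/negP => /eqP E.
  by have := hmin x0; rewrite E hv0 addey // -EFinD leye_eq.
have [rp hrp] : exists rp, r (x k.+1) = rp%:E.
  apply: @fin_val _ (_) (hninf _) _; apply/negP => /eqP E.
  by have := hprox k xs; rewrite E hrs gt0_muley ?lte_fin // addey // -EFinM -EFinD leye_eq.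
have A := @prox_ineq _ _ _ _ _ _ _ _ _ eta0 hconv (hprox k) hrs hrp.
have O := @opt_ineq R n f G _ _ _ _ _ Hq hconv hmin hrs hrp.
have SMk := SM (x k) xs.
set w := x k - xs in SMk *.
set dk := d k.
set gk := g k.
have hp : x k.+1 = x k + eta *: dk.
  by rewrite /dk /d scalerA mulfV ?gt_eqF // scale1r addrC subrK.
have E1 : x k.+1 - (x k - eta *: gk) = eta *: (dk + gk).
  by rewrite hp; apply/rowP => i; rewrite !mxE; ring.
have E2 : xs - x k.+1 = - (w + eta *: dk).
  by rewrite hp /w; apply/rowP => i; rewrite !mxE; ring.
have E3 : x k.+1 - xs = w + eta *: dk.
  by rewrite hp /w; apply/rowP => i; rewrite !mxE; ring.
rewrite E1 E2 in A; rewrite E3 in O.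
set Gv := G (x k) in SMk *.
set Gs := G xs in SMk O *.
have O' : eta * (- dotv Gs (w + eta *: dk)) <= eta * (rp - rs) by rewrite ler_pM2l.
have KEY : mu * dotv w w <= dotv (Gv - gk) w - dotv dk w + eta * dotv (Gs - Gv) dk
     + eta * dotv (Gv - gk) dk - eta * dotv dk dk.
  move: A O' SMk; rewrite !(dotvZl, dotvNr, dotvNl, dotvDl, dotvDr, dotvZr).
  move=> A O' SMk; nra.
set S := \sum_(k - K <= j < k) enorm (d j).
have dn : forall l, enorm (x l.+1 - x l) = eta * enorm (d l).
  move=> l; rewrite /d enormZ gtr0_norm ?invr_gt0 // mulrA mulfV ?gt_eqF // mul1r //.
have S0 : 0 <= S by apply: sumr_ge0 => j _; exact: enorm_ge0.
have eps : enorm (Gv - gk) <= L * (eta * S).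
  apply: le_trans (@G_lip _ _ _ _ _ (x k) (fun i => x (tau i k)) hlip) _.
  rewrite /L -[_ * _ * (eta * S)]mulrA mulr_suml; apply: ler_wpM2l; first by rewrite invr_ge0 ler0n.
  apply: ler_sum => i _; apply: ler_wpM2l => //.
  have [h1 h2] := htau i k.
  apply: le_trans (@tele _ _ x _ _ h2) _.
  rewrite /S (big_cat_nat h1 h2) /= mulrDr.
  apply: le_trans (_ : eta * \sum_(tau i k <= j < k) enorm (d j) <= _); last first.
    rewrite lerDr; apply: mulr_ge0; first exact: ltW.
    by apply: sumr_ge0 => j _; exact: enorm_ge0.
  by rewrite mulr_sumr; apply: ler_sum => j _; rewrite dn.
have b1 := CS (Gv - gk) w.
have b2 := CSn dk w.
have b3 := CS (Gs - Gv) dk.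
have b3' : enorm (Gs - Gv) <= L * enorm w by rewrite /w enormB; exact: Glip.
have b4 := CS (Gv - gk) dk.
have ww : dotv w w = enorm w ^+ 2 by rewrite enorm_sqr.
have dd : dotv dk dk = enorm dk ^+ 2 by rewrite enorm_sqr.
rewrite ww dd in KEY.
move: KEY b1 b2 b3 b3' b4 eps.
move: (dotv (Gv - gk) w) (dotv dk w) (dotv (Gs - Gv) dk) (dotv (Gv - gk) dk) => T1 T2 T3 T4.
have a0 := enorm_ge0 w; have d0 := enorm_ge0 dk; have e0 := enorm_ge0 (Gv - gk).
have h0 := enorm_ge0 (Gs - Gv).
move: a0 d0 e0 h0.
move: (enorm w) (enorm dk) (enorm (Gv - gk)) (enorm (Gs - Gv)) => a de ep hh.
move=> a0 d0 e0 h0 KEY b1 b2 b3 b3' b4 eps.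
have s1 : eta * T3 <= a * de.
  have : T3 <= L * a * de by apply: le_trans b3 _; rewrite ler_wpM2r.
  move=> h.
  have h' : eta * T3 <= eta * (L * a * de) by rewrite ler_pM2l.
  have h'' : (eta * L) * (a * de) <= 1 * (a * de).
    by apply: ler_wpM2r => //; apply: mulr_ge0.
  lra.
have s2 : eta * T4 - eta * de ^+ 2 <= eta * (ep ^+ 2 / 4).
  have hq := sqr_ge0 (ep / 2 - de).
  have : T4 - de ^+ 2 <= ep ^+ 2 / 4 by nra.
  by move=> h; rewrite -mulrBr ler_pM2l.
have s3 : mu * a ^+ 2 <= (ep + 2 * de) * a + eta * (ep ^+ 2 / 4) by nra.
have s4 : (mu * a) ^+ 2 <= (ep + 2 * de) * (mu * a) + ep ^+ 2 / 4.
  have h1 : mu * (mu * a ^+ 2) <= mu * ((ep + 2 * de) * a + eta * (ep ^+ 2 / 4)).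
    by rewrite ler_pM2l.
  have h2 : (eta * mu) * (ep ^+ 2 / 4) <= 1 * (ep ^+ 2 / 4).
    by apply: ler_wpM2r => //; apply: divr_ge0 => //; exact: sqr_ge0.
  have E : (mu * a) ^+ 2 = mu * (mu * a ^+ 2) by ring.
  rewrite E; lra.
have s5 : mu * a <= 2 * ep + 2 * de.
  move: s4; move: (mu * a) => c s4.
  case: (lerP c (2 * ep + 2 * de)) => // hc.
  have hc0 : 0 < c by lra.
  have p1 : 0 < c * (c - (ep + 2 * de) - ep) by apply: mulr_gt0 => //; lra.
  have p2 : 0 <= ep * (c - 2 * ep) by apply: mulr_ge0 => //; lra.
  have p3 : 0 <= ep ^+ 2 := sqr_ge0 ep.
  exfalso; move: s4; rewrite expr2; lra.
rewrite /Q.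
have : mu * a <= mu * (2 / mu * de + 2 * eta * (L / mu) * S).
  have -> : mu * (2 / mu * de + 2 * eta * (L / mu) * S) = 2 * de + 2 * (L * (eta * S)).
    by field; rewrite gt_eqF.
  nra.
by rewrite ler_pM2l.
Qed.
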